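(* Let $L^x,L^y>0$, let $i\neq j$ be two boxes, each box $k\in\{i,j\}$ having center $(c^x_k,c^y_k)$, side lengths $(\ell^x_k,\ell^y_k)$ and given constants $lb^s_k>0$ ($s\in\{x,y\}$). Let $$Q^{lb}=\{(c_i,c_j,\ell_i,\ell_j)\in\mathbb{R}^8:\ \tfrac12\ell^s_k\le c^s_k\le L^s-\tfrac12\ell^s_k,\ \ell^s_k\ge lb^s_k\ \ \forall s\in\{x,y\},k\in\{i,j\}\}.$$ Consider binary variables $u^s_{p,q}$ for $s\in\{x,y\}$ and $(p,q)\in\{(i,j),(j,i)\}$, and let $E$ be the set of $(c_i,c_j,\ell_i,\ell_j,u)\in\mathbb{R}^8\times\{0,1\}^4$ such that $(c_i,c_j,\ell_i,\ell_j)\in Q^{lb}$, exactly one of the four variables $u^s_{p,q}$ equals $1$, and $u^s_{p,q}=1$ implies $\mathscr{B}_p\leftarrow_s\mathscr{B}_q$ (i.e. $E$ is the embedding $\operatorname{Em}(Q^{lb},D^4,U^4)$ where the unit vector with $u^s_{p,q}=1$ encodes the branch $\mathscr{B}_p\leftarrow_s\mathscr{B}_q$). Then $E$ equals the set of $(c_i,c_j,\ell_i,\ell_j,u)$ satisfying \begin{align*} &\tfrac12\ell^s_p+lb^s_q u^s_{q,p}\le c^s_p\le L^s-\tfrac12\ell^s_p-lb^s_q u^s_{p,q} &&\forall s\in\{x,y\},(p,q)\in\{(i,j),(j,i)\},\\ &c^s_p+\tfrac12\ell^s_p\le c^s_q-\tfrac12\ell^s_q+L^s(1-u^s_{p,q})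 &&\forall s\in\{x,y\},(p,q)\in\{(i,j),(j,i)\},\\ &\ell^s_p\ge lb^s_p &&\forall s\in\{x,y\},p\in\{i,j\},\\ &u^x_{i,j}+u^x_{j,i}+u^y_{i,j}+u^y_{j,i}=1, &&\\ &u^s_{p,q}\in\{0,1\} &&\forall s\in\{x,y\},(p,q)\in\{(i,j),(j,i)\}. \end{align*} Moreover, if $lb^s_i+lb^s_j<L^s$ for both $s\in\{x,y\}$, then this formulation is ideal: every extreme point of the polyhedron obtained by replacing $u^s_{p,q}\in\{0,1\}$ with $0\le u^s_{p,q}\le 1$ has all $u$-coordinates integral.
   Context: Box $\mathscr{B}_p$ precedes box $\mathscr{B}_q$ in direction $s\in\{x,y\}$, written $\mathscr{B}_p\leftarrow_s\mathscr{B}_q$, if $c^s_p+\tfrac12\ell^s_p\le c^s_q-\tfrac12\ell^s_q$. In the paper, $lb^s_k=\beta_k/ub^s_k$ with $ub^s_k=\min\{\sqrt{\alpha_k\beta_k},L^s\}$ for given area $\alpha_k>0$ and aspect ratio $\beta_k>0$. *)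

(* Defs.v *)
From HB Require Import structures.
From mathcomp Require Import all_boot all_order all_algebra.
Set Implicit Arguments. Unset Strict Implicit. Unset Printing Implicit Defensive.
Import Order.TTheory GRing.Theory Num.Theory.
Local Open Scope ring_scope.

Inductive Dir := DX | DY.
Inductive Box := BI | BJ.

Definition other (p : Box) : Box := match p with BI => BJ | BJ => BI end.

Section Defs.
Variable R : realFieldType.

(* Data: L : Dir -> R (L^s), lb : Dir -> Box -> R (lb^s_k);
   variables: c, l : Dir -> Box -> R (c^s_k, l^s_k),
   u : Dir -> Box -> R with  u s p  standing for  u^s_{p, other p}. *)

Definition precedes (c l : Dir -> Box -> R) (s : Dir) (p q : Box) : Prop :=
  c s p + l s p / 2%:R <= c s q - l s q / 2%:R.

Definition inQlb (L : Dir -> R) (lb : Dir -> Box -> R) (c l : Dir -> Box -> R) : Prop :=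
  forall s k, l s k / 2%:R <= c s k /\ c s k <= L s - l s k / 2%:R /\ lb s k <= l s k.

Definition inEmb (L : Dir -> R) (lb : Dir -> Box -> R) (c l u : Dir -> Box -> R) : Prop :=
  inQlb L lb c l /\
  (forall s p, u s p = 0 \/ u s p = 1) /\
  (exists s0 p0, u s0 p0 = 1 /\ forall s p, (s, p) <> (s0, p0) -> u s p = 0) /\
  (forall s p, u s p = 1 -> precedes c l s p (other p)).

Definition inRelax (L : Dir -> R) (lb : Dir -> Box -> R) (c l u : Dir -> Box -> R) : Prop :=
  (forall s p, l s p / 2%:R + lb s (other p) * u s (other p) <= c s p /\
               c s p <= L s - l s p / 2%:R - lb s (other p) * u s p) /\
  (forall s p, c s p + l s p / 2%:R <= c s (other p) - l s (other p) / 2%:R + L s * (1 - u s p)) /\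
  (forall s p, lb s p <= l s p) /\
  (u DX BI + u DX BJ + u DY BI + u DY BJ = 1) /\
  (forall s p, 0 <= u s p /\ u s p <= 1).

Definition inF (L : Dir -> R) (lb : Dir -> Box -> R) (c l u : Dir -> Box -> R) : Prop :=
  inRelax L lb c l u /\ (forall s p, u s p = 0 \/ u s p = 1).

Definition extreme_relax (L : Dir -> R) (lb : Dir -> Box -> R) (c l u : Dir -> Box -> R) : Prop :=
  inRelax L lb c l u /\
  forall (c1 l1 u1 c2 l2 u2 : Dir -> Box -> R) (t : R),
    inRelax L lb c1 l1 u1 -> inRelax L lb c2 l2 u2 -> 0 < t -> t < 1 ->
    (forall s k, c s k = t * c1 s k + (1 - t) * c2 s k) ->
    (forall s k, l s k = t * l1 s k + (1 - t) * l2 s k) ->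
    (forall s k, u s k = t * u1 s k + (1 - t) * u2 s k) ->
    (forall s k, c1 s k = c s k /\ l1 s k = l s k /\ u1 s k = u s k).

End Defs.

(* Main.v *)
From HB Require Import structures.
Require Import Defs.
From mathcomp Require Import all_boot all_order all_algebra.
From mathcomp Require Import ring lra.
Set Implicit Arguments. Unset Strict Implicit. Unset Printing Implicit Defensive.
Import Order.TTheory GRing.Theory Num.Theory.
Local Open Scope ring_scope.

Section Aux.
Variable R : realFieldType.

Lemma foldr_max_ge (x0 : R) (s : seq R) :
  x0 <= foldr Num.max x0 s /\ all (fun x => x <= foldr Num.max x0 s) s.
Proof.
elim: s => [|y s [IH1 IH2]] /=; first by split.
split; first by rewrite le_max IH1 orbT.
rewrite le_max lexx /=; apply/allP => x hx.
by rewrite le_max (allP IH2 x hx) orbT.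
Qed.

Lemma foldr_max_le (x0 y : R) (s : seq R) :
  x0 <= y -> all (fun x => x <= y) s -> foldr Num.max x0 s <= y.
Proof.
move=> h; elim: s => [|z s IH] //= /andP[hz hs].
by rewrite ge_max hz IH.
Qed.

Lemma foldr_min_le (y0 : R) (s : seq R) :
  foldr Num.min y0 s <= y0 /\ all (fun y => foldr Num.min y0 s <= y) s.
Proof.
elim: s => [|y s [IH1 IH2]] /=; first by split.
split; first by rewrite ge_min IH1 orbT.
rewrite ge_min lexx /=; apply/allP => x hx.
by rewrite ge_min (allP IH2 x hx) orbT.
Qed.

Lemma pick (lo hi : seq R) :
  all (fun x => all (fun y => x <= y) hi) lo ->
  exists v, all (fun x => x <= v) lo && all (fun y => v <= y) hi.
Proof.
case: lo => [|x0 lo] H.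
  case: hi {H} => [|y0 hi]; first by exists 0.
  exists (foldr Num.min y0 hi) => /=.
  have [h1 h2] := foldr_min_le y0 hi.
  by rewrite h1 h2.
exists (foldr Num.max x0 lo).
have [h1 h2] := foldr_max_ge x0 lo.
rewrite /= h1 h2 /=.
apply/allP => y hy.
apply: foldr_max_le.
  by move: H => /= /andP[/allP /(_ y hy)].
apply/allP => x hx.
by move: H => /= /andP[_ /allP /(_ x hx) /allP /(_ y hy)].
Qed.

End Aux.

Ltac splitall := repeat match goal with H : is_true (_ && _) |- _ => move/andP: H => [? ?] end.
Ltac pickside := (simpl; repeat (apply/andP; split); try done; lra).

Section Dir1.
Variable R : realFieldType.

Definition rel1 (L lbp lbq xp yp xq yq a b : R) : Prop :=
  lbq*b <= xp /\ yp <= L - lbq*a /\ lbp*a <= xq /\ yq <= L - lbp*b /\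
  yp - xq <= L - L*a /\ yq - xp <= L - L*b /\ lbp <= yp - xp /\ lbq <= yq - xq.

Definition relh (k L lbp lbq Xp Yp Xq Yq A B : R) : Prop :=
  lbq*B <= Xp /\ Yp <= k*L - lbq*A /\ lbp*A <= Xq /\ Yq <= k*L - lbp*B /\
  Yp - Xq <= k*L - L*A /\ Yq - Xp <= k*L - L*B /\ k*lbp <= Yp - Xp /\ k*lbq <= Yq - Xq.

Lemma divle (k x y : R) : 0 < k -> x <= y -> x / k <= y / k.
Proof. by move=> hk hxy; rewrite ler_pM2r ?invr_gt0. Qed.

Lemma relh_rel1 (k L lbp lbq Xp Yp Xq Yq A B : R) : 0 < k ->
  relh k L lbp lbq Xp Yp Xq Yq A B ->
  rel1 L lbp lbq (Xp/k) (Yp/k) (Xq/k) (Yq/k) (A/k) (B/k).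
Proof.
move=> hk H.
have k0 : k != 0 by rewrite gt_eqF.
rewrite /rel1.
set xp := Xp / k. have hXp : Xp = k * xp by rewrite /xp; field.
set yp := Yp / k. have hYp : Yp = k * yp by rewrite /yp; field.
set xq := Xq / k. have hXq : Xq = k * xq by rewrite /xq; field.
set yq := Yq / k. have hYq : Yq = k * yq by rewrite /yq; field.
set a := A / k. have hA : A = k * a by rewrite /a; field.
set b := B / k. have hB : B = k * b by rewrite /b; field.
clearbody xp yp xq yq a b; subst Xp Yp Xq Yq A B.
move: H => [h1 [h2 [h3 [h4 [h5 [h6 [h7 h8]]]]]]].
by do ! split; rewrite -(ler_pM2l hk); lra.
Qed.


Lemma splitS (L lbp lbq xp yp xq yq a b : R) :
  0 < lbp -> 0 < lbq -> lbp + lbq < L -> 0 < a -> a < 1 -> 0 <= b -> a + b <= 1 ->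
  rel1 L lbp lbq xp yp xq yq a b ->
  exists Xp Yp Xq Yq, relh a L lbp lbq Xp Yp Xq Yq a 0 /\
    relh (1 - a) L lbp lbq (xp - Xp) (yp - Yp) (xq - Xq) (yq - Yq) 0 b.
Proof.
move=> hp hq hL ha ha1 hb hab [r1 [r2 [r3 [r4 [r5 [r6 [r7 r8]]]]]]].
have pf4 : 0 <= L * (1 - a - b) by apply: mulr_ge0; lra.
have pf8 : 0 <= lbp * (1 - a - b) by apply: mulr_ge0; lra.
have pf12 : 0 <= lbq * (1 - a - b) by apply: mulr_ge0; lra.
have pf13 : 0 <= (L - lbp - lbq) * a by apply: mulr_ge0; lra.
have pf14 : 0 <= (L - lbp - lbq) * b by apply: mulr_ge0; lra.
have pf15 : 0 <= (L - lbp - lbq) * (1 - a) by apply: mulr_ge0; lra.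
have pf16 : 0 <= (L - lbp - lbq) * (1 - a - b) by apply: mulr_ge0; lra.
have B1 : 0 <= (L - (lbp * b) - yq) by clear -r4; lra.
have B2 : 0 <= (L - (L * b) + xp - yq) by clear -r6; lra.
have B3 : 0 <= (- lbq - xq + yq) by clear -r8; lra.
have B4 : 0 <= (- (lbp * a) + xq) by clear -r3; lra.
have B5 : 0 <= (L - (L * a) - (lbp * b) - lbq + (lbq * a)) by clear -pf8 pf15; lra.
have B6 : 0 <= (L - (L * a) + xq - yp) by clear -r5; lra.
have B7 : 0 <= ((L * a) - (lbp * a) - (lbq * a)) by clear -pf13; lra.
have B8 : 0 <= (L - (lbp * b) - lbq - xq) by clear -r4 r8; lra.
have B9 : 0 <= (L - (L * b) - lbq + xp - xq) by clear -r6 r8; lra.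
have B10 : 0 <= (L - (lbq * a) - yp) by clear -r2; lra.
have B11 : 0 <= (L - (lbp * a) - (lbq * a) + xq - yp) by clear -r2 r3; lra.
have B12 : 0 <= (2%:R * L - (L * a) - (lbp * b) - lbq - yp) by clear -r4 r5 r8; lra.
have B13 : 0 <= (- lbp - xp + yp) by clear -r7; lra.
have B14 : 0 <= (2%:R * L - 2%:R * (L * a) - (L * b) - lbp + (lbp * a) - lbq + (lbq * a)) by clear -pf4 pf15; lra.
have B15 : 0 <= (L - (L * a) - (lbp * a) + 2%:R * xq - yp) by clear -r3 r5; lra.
have B16 : 0 <= (2%:R * L - 2%:R * (L * a) - (lbp * b) - lbq + (lbq * a) + xq - yp) by clear -r5 pf8 pf15; lra.
have B17 : 0 <= (2%:R * L - (L * a) - (L * b) - lbq + xp - yp) by clear -r5 r6 r8; lra.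
have B18 : 0 <= (- (lbq * b) + xp) by clear -r1; lra.
have B19 : 0 <= (L - (lbp * b) - (lbq * b) + xp - yq) by clear -r1 r4; lra.
have B20 : 0 <= ((L * a) - (lbp * a) - (lbq * a) - (lbq * b) + xp) by clear -r1 pf13; lra.
have B21 : 0 <= (L - (lbp * b) - lbq - (lbq * b) + xp - xq) by clear -r1 r4 r8; lra.
have B22 : 0 <= (L - (L * a) - lbp + (lbp * a) - (lbq * b)) by clear -pf12 pf15; lra.
have B23 : 0 <= (L - (L * a) - lbp - (lbq * b) + xq) by clear -r1 r5 r7; lra.
have B24 : 0 <= (2%:R * L - 2%:R * (L * a) - lbp + (lbp * a) - (lbp * b) - lbq + (lbq * a) - (lbq * b)) by clear -pf4 pf14 pf15; lra.
have B25 : 0 <= (L - (lbq * a) - (lbq * b) + xp - yp) by clear -r1 r2; lra.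
have B26 : 0 <= (L - (lbp * a) - (lbq * a) - (lbq * b) + xp + xq - yp) by clear -r1 r2 r3; lra.
have B27 : 0 <= (2%:R * L - (L * a) - (lbp * b) - lbq - (lbq * b) + xp - yp) by clear -r1 r4 r5 r8; lra.
have B28 : 0 <= (2%:R * L - (L * b) - (lbp * b) + xp - 2%:R * yq) by clear -r4 r6; lra.
have B29 : 0 <= (L + (L * a) - (L * b) - (lbp * a) - (lbq * a) + xp - yq) by clear -r6 pf13; lra.
have B30 : 0 <= (2%:R * L - (L * b) - (lbp * b) - lbq + xp - xq - yq) by clear -r4 r6 r8; lra.
have B31 : 0 <= (2%:R * L - (L * a) - (L * b) - lbp + (lbp * a) - yq) by clear -r4 pf12 pf16; lra.
have B32 : 0 <= (2%:R * L - (L * a) - (L * b) - lbp + xq - yq) by clear -r5 r6 r7; lra.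
have B33 : 0 <= (3%:R * L - 2%:R * (L * a) - (L * b) - lbp + (lbp * a) - (lbp * b) - lbq + (lbq * a) - yq) by clear -r4 pf4 pf15; lra.
have B34 : 0 <= (2%:R * L - (L * b) - (lbq * a) + xp - yp - yq) by clear -r2 r6; lra.
have B35 : 0 <= (2%:R * L - (L * b) - (lbp * a) - (lbq * a) + xp + xq - yp - yq) by clear -r2 r3 r6; lra.
have B36 : 0 <= (3%:R * L - (L * a) - (L * b) - (lbp * b) - lbq + xp - yp - yq) by clear -r4 r5 r6 r8; lra.
have B37 : 0 <= (L - (L * a) - (L * b) - lbq + (lbq * a) + xp) by clear -r1 pf8 pf16; lra.
have B38 : 0 <= (2%:R * L - (L * a) - (L * b) - (lbp * b) - lbq + (lbq * a) + xp - yq) by clear -r6 pf8 pf15; lra.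
have B39 : 0 <= (L - (L * b) - (lbp * a) - lbq + xp) by clear -r3 r6 r8; lra.
have B40 : 0 <= (2%:R * L - (L * a) - (L * b) - (lbp * b) - 2%:R * lbq + (lbq * a) + xp - xq) by clear -r6 r8 pf8 pf15; lra.
have B41 : 0 <= (2%:R * L - 2%:R * (L * a) - (L * b) - lbp - lbq + (lbq * a) + xq) by clear -r3 pf4 pf15; lra.
have B42 : 0 <= (3%:R * L - 3%:R * (L * a) - (L * b) - lbp + (lbp * a) - (lbp * b) - 2%:R * lbq + 2%:R * (lbq * a)) by clear -pf4 pf8 pf15; lra.
have B43 : 0 <= (2%:R * L - (L * a) - (L * b) - (lbp * a) - lbq + xp + xq - yp) by clear -r3 r5 r6 r8; lra.
have B44 : 0 <= (3%:R * L - 2%:R * (L * a) - (L * b) - (lbp * b) - 2%:R * lbq + (lbq * a) + xp - yp) by clear -r5 r6 r8 pf8 pf15; lra.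
have B45 : 0 <= (L + (L * a) - (L * b) - (lbp * a) - lbq - (lbq * a) + xp - xq) by clear -r6 r8 pf13; lra.
have B46 : 0 <= (2%:R * L - (L * b) - (lbp * b) - 2%:R * lbq + xp - 2%:R * xq) by clear -r4 r6 r8; lra.
have B47 : 0 <= (2%:R * L - (L * a) - (L * b) - lbp + (lbp * a) - lbq - xq) by clear -r4 r8 pf12 pf16; lra.
have B48 : 0 <= (2%:R * L - (L * a) - (L * b) - lbp - lbq) by clear -r5 r6 r7 r8; lra.
have B49 : 0 <= (3%:R * L - 2%:R * (L * a) - (L * b) - lbp + (lbp * a) - (lbp * b) - 2%:R * lbq + (lbq * a) - xq) by clear -r4 r8 pf4 pf15; lra.
have B50 : 0 <= (2%:R * L - (L * b) - lbq - (lbq * a) + xp - xq - yp) by clear -r2 r6 r8; lra.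
have B51 : 0 <= (2%:R * L - (L * b) - (lbp * a) - lbq - (lbq * a) + xp - yp) by clear -r2 r3 r6 r8; lra.
have B52 : 0 <= (3%:R * L - (L * a) - (L * b) - (lbp * b) - 2%:R * lbq + xp - xq - yp) by clear -r4 r5 r6 r8; lra.
have B53 : 0 <= (L + (L * a) - (lbp * a) - (lbp * b) - (lbq * a) - yq) by clear -r4 pf13; lra.
have B54 : 0 <= (2%:R * (L * a) - 2%:R * (lbp * a) - 2%:R * (lbq * a)) by clear -pf13; lra.
have B55 : 0 <= (L + (L * a) - (lbp * a) - (lbp * b) - lbq - (lbq * a) - xq) by clear -r4 r8 pf13; lra.
have B56 : 0 <= (L - lbp - (lbq * a) - xp) by clear -r2 r7; lra.
have B57 : 0 <= (L - lbp - (lbp * a) - (lbq * a) - xp + xq) by clear -r2 r3 r7; lra.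
have B58 : 0 <= (2%:R * L - (L * a) - lbp - (lbp * b) - lbq - xp) by clear -r4 r5 r7 r8; lra.
have B59 : 0 <= (L + (L * a) - (lbp * a) - 2%:R * (lbq * a) - yp) by clear -r2 pf13; lra.
have B60 : 0 <= (L + (L * a) - 2%:R * (lbp * a) - 2%:R * (lbq * a) + xq - yp) by clear -r2 r3 pf13; lra.
have B61 : 0 <= (2%:R * L - (lbp * a) - (lbp * b) - lbq - (lbq * a) - yp) by clear -r2 r3 r4 r8; lra.
have B62 : 0 <= (3%:R * L - 2%:R * (L * a) - (L * b) - lbp + (lbp * a) - lbq - yp) by clear -r2 pf4 pf15; lra.
have B63 : 0 <= (3%:R * L - 2%:R * (L * a) - (L * b) - lbp - lbq + xq - yp) by clear -r5 r6 r7 r8; lra.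
have B64 : 0 <= (4%:R * L - 3%:R * (L * a) - (L * b) - lbp + (lbp * a) - (lbp * b) - 2%:R * lbq + (lbq * a) - yp) by clear -r4 r5 r8 pf4 pf15; lra.
have B65 : 0 <= (3%:R * L - (L * a) - (L * b) - lbq - (lbq * a) + xp - 2%:R * yp) by clear -r2 r5 r6 r8; lra.
have B66 : 0 <= (3%:R * L - (L * a) - (L * b) - (lbp * a) - lbq - (lbq * a) + xp + xq - 2%:R * yp) by clear -r2 r3 r5 r6 r8; lra.
have B67 : 0 <= (4%:R * L - 2%:R * (L * a) - (L * b) - (lbp * b) - 2%:R * lbq + xp - 2%:R * yp) by clear -r4 r5 r6 r8; lra.
have B68 : 0 <= (L - (lbp * a) - (lbp * b) + xq - yq) by clear -r3 r4; lra.
have B69 : 0 <= ((L * a) - 2%:R * (lbp * a) - (lbq * a) + xq) by clear -r3 pf13; lra.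
have B70 : 0 <= (L - (lbp * a) - (lbp * b) - lbq) by clear -r3 r4 r8; lra.
have B71 : 0 <= (L - (L * a) - lbp - xp + xq) by clear -r5 r7; lra.
have B72 : 0 <= (L - (L * a) - lbp - (lbp * a) - xp + 2%:R * xq) by clear -r3 r5 r7; lra.
have B73 : 0 <= (2%:R * L - 2%:R * (L * a) - lbp - (lbp * b) - lbq + (lbq * a) - xp + xq) by clear -r5 r7 pf8 pf15; lra.
have B74 : 0 <= (L - 2%:R * (lbp * a) - (lbq * a) + 2%:R * xq - yp) by clear -r2 r3; lra.
have B75 : 0 <= (2%:R * L - (L * a) - (lbp * a) - (lbp * b) - lbq + xq - yp) by clear -r3 r4 r5 r8; lra.
have B76 : 0 <= (2%:R * L - 2%:R * (L * a) - (L * b) - lbq + (lbq * a) + xp + xq - yp) by clear -r1 r5 pf8 pf16; lra.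
have B77 : 0 <= (3%:R * L - 2%:R * (L * a) - (L * b) - (lbp * b) - lbq + (lbq * a) + xp + xq - yp - yq) by clear -r5 r6 pf8 pf15; lra.
have B78 : 0 <= (3%:R * L - 3%:R * (L * a) - (L * b) - lbp + (lbp * a) - lbq + (lbq * a) + xq - yp) by clear -r5 pf4 pf15; lra.
have B79 : 0 <= (3%:R * L - 3%:R * (L * a) - (L * b) - lbp - lbq + (lbq * a) + 2%:R * xq - yp) by clear -r3 r5 pf4 pf15; lra.
have B80 : 0 <= (4%:R * L - 4%:R * (L * a) - (L * b) - lbp + (lbp * a) - (lbp * b) - 2%:R * lbq + 2%:R * (lbq * a) + xq - yp) by clear -r5 pf4 pf8 pf15; lra.
have B81 : 0 <= (3%:R * L - 2%:R * (L * a) - (L * b) - lbq + xp + xq - 2%:R * yp) by clear -r5 r6 r8; lra.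
have B82 : 0 <= (3%:R * L - 2%:R * (L * a) - (L * b) - (lbp * a) - lbq + xp + 2%:R * xq - 2%:R * yp) by clear -r3 r5 r6 r8; lra.
have B83 : 0 <= (4%:R * L - 3%:R * (L * a) - (L * b) - (lbp * b) - 2%:R * lbq + (lbq * a) + xp + xq - 2%:R * yp) by clear -r5 r6 r8 pf8 pf15; lra.
have SCXp : all (fun x => all (fun y => x <= y) [:: (0 + (- (lbq * b) + xp)); (0 + (L - (L * b) + xp - yq)); (0 + (L - (L * a) - (L * b) - lbq + (lbq * a) + xp)); (0 + (L - (L * b) - lbq + xp - xq)); (0 + ((L * a) - (lbp * a) - (lbq * a))); (0 + (2%:R * L - (L * a) - (L * b) - lbq + xp - yp)); (0 + (- (lbp * a) + xq)); (0 + (2%:R * L - 2%:R * (L * a) - (L * b) - lbq + (lbq * a) + xp + xq - yp))]) [:: (0 - 0); (0 - (L - (lbp * b) - yq)); (0 - ((L * a) - (lbp * a) - (lbq * a))); (0 - (L - (lbp * b) - lbq - xq)); (0 - (L - (L * a) - lbp + (lbp * a) - xp)); (0 - (L - (L * a) - lbp - xp + xq)); (0 - (2%:R * L - 2%:R * (L * a) - lbp + (lbp * a) - (lbp * b) - lbq + (lbq * a) - xp)); (0 - (L - (lbq * a) - yp)); (0 - (L - (lbp * a) - (lbq * a) + xq - yp)); (0 - (2%:R * L - (L * a) - (lbp * b) - lbq - yp))].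
{ rewrite /=. apply/andP; split; [apply/andP; split; [by clear -B18; lra | apply/andP; split; [by clear -B2; lra | apply/andP; split; [by clear -B37; lra | apply/andP; split; [by clear -B9; lra | apply/andP; split; [by clear -B7; lra | apply/andP; split; [by clear -B17; lra | apply/andP; split; [by clear -B4; lra | apply/andP; split; [by clear -B76; lra | done]]]]]]]] | apply/andP; split; [apply/andP; split; [by clear -B19; lra | apply/andP; split; [by clear -B28; lra | apply/andP; split; [by clear -B38; lra | apply/andP; split; [by clear -B30; lra | apply/andP; split; [by clear -B53; lra | apply/andP; split; [by clear -B36; lra | apply/andP; split; [by clear -B68; lra | apply/andP; split; [by clear -B77; lra | done]]]]]]]] | apply/andP; split; [apply/andP; split; [by clear -B20; lra | apply/andP; split; [by clear -B29; lra | apply/andP; split; [by clear -B39; lra | apply/andP; split; [by clear -B45; lra | apply/andP; split; [by clear -B54; lra | apply/andP; split; [by clear -B51; lra | apply/andP; split; [by clear -B69; lra | apply/andP; split; [by clear -B43; lra | done]]]]]]]] | apply/andP; split; [apply/andP; split; [by clear -B21; lra | apply/andP; split; [by clear -B30; lra | apply/andP; split; [by clear -B40; lra | apply/andP; split; [by clear -B46; lra | apply/andP; split; [by clear -B55; lra | apply/andP; split; [by clear -B52; lra | apply/andP; split; [by clear -B70; lra | apply/andP; split; [by clear -B44; lra | done]]]]]]]] | apply/andP; split; [apply/andP; split; [by clear -B22; lra | apply/andP; split; [by clear -B31; lra | apply/andP; split; [by clear -B14; lra | apply/andP; split; [by clear -B47; lra | apply/andP; split; [by clear -B56; lra | apply/andP;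 split; [by clear -B62; lra | apply/andP; split; [by clear -B71; lra | apply/andP; split; [by clear -B78; lra | done]]]]]]]] | apply/andP; split; [apply/andP; split; [by clear -B23; lra | apply/andP; split; [by clear -B32; lra | apply/andP; split; [by clear -B41; lra | apply/andP; split; [by clear -B48; lra | apply/andP; split; [by clear -B57; lra | apply/andP; split; [by clear -B63; lra | apply/andP; split; [by clear -B72; lra | apply/andP; split; [by clear -B79; lra | done]]]]]]]] | apply/andP; split; [apply/andP; split; [by clear -B24; lra | apply/andP; split; [by clear -B33; lra | apply/andP; split; [by clear -B42; lra | apply/andP; split; [by clear -B49; lra | apply/andP; split; [by clear -B58; lra | apply/andP; split; [by clear -B64; lra | apply/andP; split; [by clear -B73; lra | apply/andP; split; [by clear -B80; lra | done]]]]]]]] | apply/andP; split; [apply/andP; split; [by clear -B25; lra | apply/andP; split; [by clear -B34; lra | apply/andP; split; [by clear -B17; lra | apply/andP; split; [by clear -B50; lra | apply/andP; split; [by clear -B59; lra | apply/andP; split; [by clear -B65; lra | apply/andP; split; [by clear -B11; lra | apply/andP; split; [by clear -B81; lra | done]]]]]]]] | apply/andP; split; [apply/andP; split; [by clear -B26; lra | apply/andP; split; [by clear -B35; lra | apply/andP; split; [by clear -B43; lra | apply/andP; split; [by clear -B51; lra | apply/andP; split; [by clear -B60; lra | apply/andP; split; [by clear -B66; lra | apply/andP; split; [by clear -B74; lra | apply/andP; split; [by clear -B82; lra | done]]]]]]]] | apply/andP; split; [apply/andP; split; [by clear -B27; lra | apply/andP; split; [by clear -B36; lra | apply/andP; split;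 [by clear -B44; lra | apply/andP; split; [by clear -B52; lra | apply/andP; split; [by clear -B61; lra | apply/andP; split; [by clear -B67; lra | apply/andP; split; [by clear -B75; lra | apply/andP; split; [by clear -B83; lra | done]]]]]]]] | done]]]]]]]]]]. }
have [Xp /andP[HlXp HhXp]] := pick SCXp; clear SCXp.
move: HlXp HhXp => /= /andP[E84 /andP[E85 /andP[E86 /andP[E87 /andP[E88 /andP[E89 /andP[E90 /andP[E91 /andP[E92 /andP[E93 _]]]]]]]]]] /andP[E94 /andP[E95 /andP[E96 /andP[E97 /andP[E98 /andP[E99 /andP[E100 /andP[E101 _]]]]]]]].
have SCYp : all (fun x => all (fun y => x <= y) [:: (0 + ((L * a) - (lbq * a))); (Xp + (- lbp + (lbp * a) - xp + yp)); (0 + (xq)); (Xp + ((L * a) - (lbq * a)))]) [:: (Xp - (- (lbp * a))); (0 - (L - (L * a) - yp)); (0 - (L - (L * a) - (lbp * a) + xq - yp)); (0 - (2%:R * L - 2%:R * (L * a) - (lbp * b) - lbq + (lbq * a) - yp)); (Xp - (2%:R * L - 2%:R * (L * a) - (L * b) - lbq + (lbq * a) + xp - yp))].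
{ rewrite /=. apply/andP; split; [apply/andP; split; [by clear -E98; lra | apply/andP; split; [by clear -B13; lra | apply/andP; split; [by clear -E100; lra | apply/andP; split; [by clear -B7; lra | done]]]] | apply/andP; split; [apply/andP; split; [by clear -B10; lra | apply/andP; split; [by clear -E88; lra | apply/andP; split; [by clear -B6; lra | apply/andP; split; [by clear -E91; lra | done]]]] | apply/andP; split; [apply/andP; split; [by clear -B11; lra | apply/andP; split; [by clear -E89; lra | apply/andP; split; [by clear -B15; lra | apply/andP; split; [by clear -E92; lra | done]]]] | apply/andP; split; [apply/andP; split; [by clear -B12; lra | apply/andP; split; [by clear -E90; lra | apply/andP; split; [by clear -B16; lra | apply/andP; split; [by clear -E93; lra | done]]]] | apply/andP; split; [apply/andP; split; [by clear -E99; lra | apply/andP; split; [by clear -B14; lra | apply/andP; split; [by clear -E101; lra | apply/andP; split; [by clear -B17; lra | done]]]] | done]]]]]. }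
have [Yp /andP[HlYp HhYp]] := pick SCYp; clear SCYp.
move: HlYp HhYp => /= /andP[E102 /andP[E103 /andP[E104 /andP[E105 /andP[E106 _]]]]] /andP[E107 /andP[E108 /andP[E109 /andP[E110 _]]]].
have SCXq : all (fun x => all (fun y => x <= y) [:: (0 + (xq)); (Yp + (L - (L * a) + xq - yp)); (0 + ((L * a) - (lbq * a))); (Xp + ((L * a) - (lbq * a)))]) [:: (0 - (- (lbp * a))); (Yp - 0); (0 - (L - (L * a) - (lbp * b) - lbq + (lbq * a) - xq)); (Xp - (L - (L * a) - (L * b) - lbq + (lbq * a) + xp - xq))].
{ rewrite /=. apply/andP; split; [apply/andP; split; [by clear -B4; lra | apply/andP; split; [by clear -E104; lra | apply/andP; split; [by clear -B7; lra | apply/andP; split; [by clear -E86; lra | done]]]] | apply/andP; split; [apply/andP; split; [by clear -E109; lra | apply/andP; split; [by clear -B6; lra | apply/andP; split; [by clear -E107; lra | apply/andP; split; [by clear -E110; lra | done]]]] | apply/andP; split; [apply/andP; split; [by clear -B5; lra | apply/andP; split; [by clear -E105; lra | apply/andP; split; [by clear -B8; lra | apply/andP; split; [by clear -E87; lra | done]]]] | apply/andP; split; [apply/andP; split; [by clear -E96; lra | apply/andP; split; [by clear -E106; lra | apply/andP; split; [by clear -E97; lra | apply/andP; split; [by clear -B9; lra | done]]]] | done]]]]. }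
have [Xq /andP[HlXq HhXq]] := pick SCXq; clear SCXq.
move: HlXq HhXq => /= /andP[E111 /andP[E112 /andP[E113 /andP[E114 _]]]] /andP[E115 /andP[E116 /andP[E117 /andP[E118 _]]]].
have SCYq : all (fun x => all (fun y => x <= y) [:: (0 + ((L * a))); (Xp + ((L * a))); (Xq + (- lbq + (lbq * a) - xq + yq))]) [:: (Xq - (- (lbq * a))); (0 - (L - (L * a) - (lbp * b) - yq)); (Xp - (L - (L * a) - (L * b) + xp - yq))].
{ rewrite /=. apply/andP; split; [apply/andP; split; [by clear -E117; lra | apply/andP; split; [by clear -E118; lra | apply/andP; split; [by clear -B3; lra | done]]] | apply/andP; split; [apply/andP; split; [by clear -B1; lra | apply/andP; split; [by clear -E85; lra | apply/andP; split; [by clear -E113; lra | done]]] | apply/andP; split; [apply/andP; split; [by clear -E95; lra | apply/andP; split; [by clear -B2; lra | apply/andP; split; [by clear -E114; lra | done]]] | done]]]. }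
have [Yq /andP[HlYq HhYq]] := pick SCYq; clear SCYq.
move: HlYq HhYq => /= /andP[E119 /andP[E120 /andP[E121 _]]] /andP[E122 /andP[E123 /andP[E124 _]]].
exists Xp, Yp, Xq, Yq; rewrite /relh; do ! split; clear -E102 E103 E107 E108 E111 E112 E115 E116 E119 E120 E121 E122 E123 E124 E84 E94; lra.
Qed.

Lemma splitT (L lbp lbq xp yp xq yq a b t : R) :
  0 < lbp -> 0 < lbq -> lbp + lbq < L -> 0 <= a -> 0 <= b -> 0 < t -> t < 1 -> a + b + t <= 1 ->
  rel1 L lbp lbq xp yp xq yq a b ->
  exists Xp Yp Xq Yq, relh t L lbp lbq Xp Yp Xq Yq 0 0 /\
    relh (1 - t) L lbp lbq (xp - Xp) (yp - Yp) (xq - Xq) (yq - Yq) a b.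
Proof.
move=> hp hq hL ha hb ht ht1 habt [r1 [r2 [r3 [r4 [r5 [r6 [r7 r8]]]]]]].
have pf3 : 0 <= L * t by apply: mulr_ge0; lra.
have pf5 : 0 <= L * (1 - a - b - t) by apply: mulr_ge0; lra.
have pf11 : 0 <= lbp * t by apply: mulr_ge0; lra.
have pf13 : 0 <= lbp * (1 - a - b - t) by apply: mulr_ge0; lra.
have pf19 : 0 <= lbq * t by apply: mulr_ge0; lra.
have pf21 : 0 <= lbq * (1 - a - b - t) by apply: mulr_ge0; lra.
have pf25 : 0 <= (L - lbp - lbq) * a by apply: mulr_ge0; lra.
have pf26 : 0 <= (L - lbp - lbq) * b by apply: mulr_ge0; lra.
have pf27 : 0 <= (L - lbp - lbq) * t by apply: mulr_ge0; lra.
have pf28 : 0 <= (L - lbp - lbq) * (1 - t) by apply: mulr_ge0; lra.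
have pf29 : 0 <= (L - lbp - lbq) * (1 - a - b - t) by apply: mulr_ge0; lra.
have B1 : 0 <= (L - (lbp * b) - yq) by clear -r4; lra.
have B2 : 0 <= (L - (L * b) + xp - yq) by clear -r6; lra.
have B3 : 0 <= (- lbq - xq + yq) by clear -r8; lra.
have B4 : 0 <= (- (lbp * a) + xq) by clear -r3; lra.
have B5 : 0 <= (L - (L * t) - (lbp * a) - (lbp * b) - lbq + (lbq * t)) by clear -pf13 pf28; lra.
have B6 : 0 <= (L - (L * a) + xq - yp) by clear -r5; lra.
have B7 : 0 <= ((L * t) - (lbq * t)) by clear -pf11 pf27; lra.
have B8 : 0 <= (L - (lbp * b) - lbq - xq) by clear -r4 r8; lra.
have B9 : 0 <= (L - (L * b) - lbq + xp - xq) by clear -r6 r8; lra.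
have B10 : 0 <= (L - (lbq * a) - yp) by clear -r2; lra.
have B11 : 0 <= (2%:R * L - (L * a) - (L * t) - (lbp * b) - lbq + (lbq * t) - yp) by clear -r2 pf13 pf26 pf29; lra.
have B12 : 0 <= (- lbp - xp + yp) by clear -r7; lra.
have B13 : 0 <= (2%:R * L - (L * a) - (L * b) - 2%:R * (L * t) - lbp + (lbp * t) - lbq + (lbq * t)) by clear -pf5 pf28; lra.
have B14 : 0 <= (L - (lbp * a) - (lbq * a) + xq - yp) by clear -r2 r3; lra.
have B15 : 0 <= (L - (L * a) - (lbp * a) + 2%:R * xq - yp) by clear -r3 r5; lra.
have B16 : 0 <= (2%:R * L - (L * a) - (L * t) - (lbp * a) - (lbp * b) - lbq + (lbq * t) + xq - yp) by clear -r5 pf13 pf28; lra.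
have B17 : 0 <= (L + (L * t) - (lbq * a) - (lbq * t) - yp) by clear -r2 pf11 pf27; lra.
have B18 : 0 <= (L - (L * a) + (L * t) - (lbq * t) + xq - yp) by clear -r5 pf11 pf27; lra.
have B19 : 0 <= (2%:R * L - (L * a) - (lbp * b) - lbq - yp) by clear -r4 r5 r8; lra.
have B20 : 0 <= (2%:R * (L * t) - (lbp * t) - (lbq * t)) by clear -pf3 pf27; lra.
have B21 : 0 <= (2%:R * L - (L * a) - (L * b) - lbq + xp - yp) by clear -r5 r6 r8; lra.
have B22 : 0 <= (- (lbq * b) + xp) by clear -r1; lra.
have B23 : 0 <= (L - (lbp * b) - (lbq * b) + xp - yq) by clear -r1 r4; lra.
have B24 : 0 <= ((L * t) - (lbq * b) - (lbq * t) + xp) by clear -r1 pf11 pf27; lra.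
have B25 : 0 <= (L - (lbp * b) - lbq - (lbq * b) + xp - xq) by clear -r1 r4 r8; lra.
have B26 : 0 <= (L - (L * t) - lbp + (lbp * t) - (lbq * a) - (lbq * b)) by clear -pf21 pf28; lra.
have B27 : 0 <= (L - (L * a) - (L * t) - lbp + (lbp * t) - (lbq * b) + xq) by clear -r3 pf21 pf26 pf29; lra.
have B28 : 0 <= (2%:R * L - (L * a) - 2%:R * (L * t) - lbp - (lbp * b) + (lbp * t) - lbq - (lbq * b) + (lbq * t)) by clear -pf5 pf26 pf28; lra.
have B29 : 0 <= (L + (L * t) - (lbq * a) - (lbq * b) - (lbq * t) + xp - yp) by clear -r1 r2 pf11 pf27; lra.
have B30 : 0 <= (L - (L * a) + (L * t) - (lbq * b) - (lbq * t) + xp + xq - yp) by clear -r1 r5 pf11 pf27; lra.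
have B31 : 0 <= (2%:R * L - (L * a) - (lbp * b) - lbq - (lbq * b) + xp - yp) by clear -r1 r4 r5 r8; lra.
have B32 : 0 <= (2%:R * L - (L * b) - (lbp * b) + xp - 2%:R * yq) by clear -r4 r6; lra.
have B33 : 0 <= (L - (L * b) + (L * t) - (lbq * t) + xp - yq) by clear -r6 pf11 pf27; lra.
have B34 : 0 <= (2%:R * L - (L * b) - (lbp * b) - lbq + xp - xq - yq) by clear -r4 r6 r8; lra.
have B35 : 0 <= (2%:R * L - (L * b) - (L * t) - lbp + (lbp * t) - (lbq * a) - yq) by clear -r4 pf21 pf25 pf29; lra.
have B36 : 0 <= (2%:R * L - (L * a) - (L * b) - (L * t) - lbp + (lbp * t) + xq - yq) by clear -r3 r4 pf21 pf29; lra.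
have B37 : 0 <= (3%:R * L - (L * a) - (L * b) - 2%:R * (L * t) - lbp - (lbp * b) + (lbp * t) - lbq + (lbq * t) - yq) by clear -r4 pf5 pf28; lra.
have B38 : 0 <= (2%:R * L - (L * b) + (L * t) - (lbq * a) - (lbq * t) + xp - yp - yq) by clear -r2 r6 pf11 pf27; lra.
have B39 : 0 <= (2%:R * L - (L * a) - (L * b) + (L * t) - (lbq * t) + xp + xq - yp - yq) by clear -r5 r6 pf11 pf27; lra.
have B40 : 0 <= (3%:R * L - (L * a) - (L * b) - (lbp * b) - lbq + xp - yp - yq) by clear -r4 r5 r6 r8; lra.
have B41 : 0 <= (L - (L * b) - (L * t) - (lbp * a) - lbq + (lbq * t) + xp) by clear -r1 pf13 pf25 pf29; lra.
have B42 : 0 <= (2%:R * L - (L * b) - (L * t) - (lbp * a) - (lbp * b) - lbq + (lbq * t) + xp - yq) by clear -r6 pf13 pf28; lra.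
have B43 : 0 <= (L - (L * b) - (lbp * a) - lbq + xp) by clear -r3 r6 r8; lra.
have B44 : 0 <= (2%:R * L - (L * b) - (L * t) - (lbp * a) - (lbp * b) - 2%:R * lbq + (lbq * t) + xp - xq) by clear -r6 r8 pf13 pf28; lra.
have B45 : 0 <= (2%:R * L - (L * b) - 2%:R * (L * t) - lbp - (lbp * a) + (lbp * t) - lbq - (lbq * a) + (lbq * t)) by clear -pf5 pf25 pf28; lra.
have B46 : 0 <= (2%:R * L - (L * a) - (L * b) - 2%:R * (L * t) - lbp - (lbp * a) + (lbp * t) - lbq + (lbq * t) + xq) by clear -r3 pf5 pf28; lra.
have B47 : 0 <= (3%:R * L - (L * a) - (L * b) - 3%:R * (L * t) - lbp - (lbp * a) - (lbp * b) + (lbp * t) - 2%:R * lbq + 2%:R * (lbq * t)) by clear -pf5 pf13 pf28; lra.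
have B48 : 0 <= (2%:R * L - (L * b) - (lbp * a) - lbq - (lbq * a) + xp - yp) by clear -r2 r3 r6 r8; lra.
have B49 : 0 <= (2%:R * L - (L * a) - (L * b) - (lbp * a) - lbq + xp + xq - yp) by clear -r3 r5 r6 r8; lra.
have B50 : 0 <= (3%:R * L - (L * a) - (L * b) - (L * t) - (lbp * a) - (lbp * b) - 2%:R * lbq + (lbq * t) + xp - yp) by clear -r5 r6 r8 pf13 pf28; lra.
have B51 : 0 <= (L - (L * b) + (L * t) - lbq - (lbq * t) + xp - xq) by clear -r6 r8 pf11 pf27; lra.
have B52 : 0 <= (2%:R * L - (L * b) - (lbp * b) - 2%:R * lbq + xp - 2%:R * xq) by clear -r4 r6 r8; lra.
have B53 : 0 <= (2%:R * L - (L * b) - (L * t) - lbp + (lbp * t) - lbq - (lbq * a) - xq) by clear -r4 r8 pf21 pf25 pf29; lra.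
have B54 : 0 <= (2%:R * L - (L * a) - (L * b) - (L * t) - lbp + (lbp * t) - lbq) by clear -hL pf5 pf11; lra.
have B55 : 0 <= (3%:R * L - (L * a) - (L * b) - 2%:R * (L * t) - lbp - (lbp * b) + (lbp * t) - 2%:R * lbq + (lbq * t) - xq) by clear -r4 r8 pf5 pf28; lra.
have B56 : 0 <= (2%:R * L - (L * b) + (L * t) - lbq - (lbq * a) - (lbq * t) + xp - xq - yp) by clear -r2 r6 r8 pf11 pf27; lra.
have B57 : 0 <= (2%:R * L - (L * a) - (L * b) + (L * t) - lbq - (lbq * t) + xp - yp) by clear -r5 r6 r8 pf11 pf27; lra.
have B58 : 0 <= (3%:R * L - (L * a) - (L * b) - (lbp * b) - 2%:R * lbq + xp - xq - yp) by clear -r4 r5 r6 r8; lra.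
have B59 : 0 <= ((L * t) - (lbp * t)) by clear -pf19 pf27; lra.
have B60 : 0 <= (L + (L * t) - (lbp * b) - (lbp * t) - yq) by clear -r4 pf19 pf27; lra.
have B61 : 0 <= (L + (L * t) - (lbp * b) - (lbp * t) - lbq - xq) by clear -r4 r8 pf19 pf27; lra.
have B62 : 0 <= (L - lbp - (lbq * a) - xp) by clear -r2 r7; lra.
have B63 : 0 <= (L - (L * a) - lbp - xp + xq) by clear -r5 r7; lra.
have B64 : 0 <= (2%:R * L - (L * a) - (L * t) - lbp - (lbp * b) - lbq + (lbq * t) - xp) by clear -r2 r7 pf13 pf26 pf29; lra.
have B65 : 0 <= (L + 2%:R * (L * t) - (lbp * t) - (lbq * a) - (lbq * t) - yp) by clear -r2 pf3 pf27; lra.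
have B66 : 0 <= (L - (L * a) + 2%:R * (L * t) - (lbp * t) - (lbq * t) + xq - yp) by clear -r5 pf3 pf27; lra.
have B67 : 0 <= (2%:R * L - (L * a) + (L * t) - (lbp * b) - (lbp * t) - lbq - yp) by clear -r4 r5 r8 pf19 pf27; lra.
have B68 : 0 <= (2%:R * L - (L * a) - (L * b) - (L * t) - lbq + (lbq * t) + xp - yp) by clear -r1 r2 pf13 pf29; lra.
have B69 : 0 <= (3%:R * L - (L * a) - (L * b) - (L * t) - (lbp * b) - lbq + (lbq * t) + xp - yp - yq) by clear -r1 r2 r4 pf13 pf29; lra.
have B70 : 0 <= (3%:R * L - (L * a) - (L * b) - (L * t) - (lbp * b) - 2%:R * lbq + (lbq * t) + xp - xq - yp) by clear -r1 r2 r4 r8 pf13 pf29; lra.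
have B71 : 0 <= (3%:R * L - (L * a) - (L * b) - 2%:R * (L * t) - lbp + (lbp * t) - lbq - (lbq * a) + (lbq * t) - yp) by clear -r2 pf5 pf28; lra.
have B72 : 0 <= (3%:R * L - 2%:R * (L * a) - (L * b) - 2%:R * (L * t) - lbp + (lbp * t) - lbq + (lbq * t) + xq - yp) by clear -r5 pf5 pf28; lra.
have B73 : 0 <= (4%:R * L - 2%:R * (L * a) - (L * b) - 3%:R * (L * t) - lbp - (lbp * b) + (lbp * t) - 2%:R * lbq + 2%:R * (lbq * t) - yp) by clear -r2 pf5 pf13 pf26 pf28 pf29; lra.
have B74 : 0 <= (3%:R * L - (L * a) - (L * b) - lbq - (lbq * a) + xp - 2%:R * yp) by clear -r2 r5 r6 r8; lra.
have B75 : 0 <= (3%:R * L - 2%:R * (L * a) - (L * b) - lbq + xp + xq - 2%:R * yp) by clear -r5 r6 r8; lra.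
have B76 : 0 <= (4%:R * L - 2%:R * (L * a) - (L * b) - (L * t) - (lbp * b) - 2%:R * lbq + (lbq * t) + xp - 2%:R * yp) by clear -r1 r2 r4 r5 r8 pf13 pf29; lra.
have B77 : 0 <= ((L * t) - (lbp * a) - (lbp * t) + xq) by clear -r3 pf19 pf27; lra.
have B78 : 0 <= (L + (L * t) - (lbp * a) - (lbp * b) - (lbp * t) + xq - yq) by clear -r3 r4 pf19 pf27; lra.
have B79 : 0 <= (2%:R * (L * t) - (lbp * a) - (lbp * t) - (lbq * t) + xq) by clear -r3 pf3 pf27; lra.
have B80 : 0 <= (L + (L * t) - (lbp * a) - (lbp * b) - (lbp * t) - lbq) by clear -hL pf3 pf13; lra.
have B81 : 0 <= (L - lbp - (lbp * a) - (lbq * a) - xp + xq) by clear -r2 r3 r7; lra.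
have B82 : 0 <= (L - (L * a) - lbp - (lbp * a) - xp + 2%:R * xq) by clear -r3 r5 r7; lra.
have B83 : 0 <= (2%:R * L - (L * a) - (L * t) - lbp - (lbp * a) - (lbp * b) - lbq + (lbq * t) - xp + xq) by clear -r5 r7 pf13 pf28; lra.
have B84 : 0 <= (L + 2%:R * (L * t) - (lbp * a) - (lbp * t) - (lbq * a) - (lbq * t) + xq - yp) by clear -r2 r3 pf3 pf27; lra.
have B85 : 0 <= (L - (L * a) + 2%:R * (L * t) - (lbp * a) - (lbp * t) - (lbq * t) + 2%:R * xq - yp) by clear -r3 r5 pf3 pf27; lra.
have B86 : 0 <= (2%:R * L - (L * a) + (L * t) - (lbp * a) - (lbp * b) - (lbp * t) - lbq + xq - yp) by clear -r5 hL pf3 pf13; lra.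
have B87 : 0 <= (2%:R * L - (L * a) - (L * b) - (L * t) - (lbp * a) - lbq + (lbq * t) + xp + xq - yp) by clear -r1 r2 r3 pf13 pf29; lra.
have B88 : 0 <= (3%:R * L - (L * a) - (L * b) - (L * t) - (lbp * a) - (lbp * b) - lbq + (lbq * t) + xp + xq - yp - yq) by clear -r5 r6 pf13 pf28; lra.
have B89 : 0 <= (3%:R * L - (L * a) - (L * b) - 2%:R * (L * t) - lbp - (lbp * a) + (lbp * t) - lbq - (lbq * a) + (lbq * t) + xq - yp) by clear -r2 r3 pf5 pf28; lra.
have B90 : 0 <= (3%:R * L - 2%:R * (L * a) - (L * b) - 2%:R * (L * t) - lbp - (lbp * a) + (lbp * t) - lbq + (lbq * t) + 2%:R * xq - yp) by clear -r3 r5 pf5 pf28; lra.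
have B91 : 0 <= (4%:R * L - 2%:R * (L * a) - (L * b) - 3%:R * (L * t) - lbp - (lbp * a) - (lbp * b) + (lbp * t) - 2%:R * lbq + 2%:R * (lbq * t) + xq - yp) by clear -r5 pf5 pf13 pf28; lra.
have B92 : 0 <= (3%:R * L - (L * a) - (L * b) - (lbp * a) - lbq - (lbq * a) + xp + xq - 2%:R * yp) by clear -r2 r3 r5 r6 r8; lra.
have B93 : 0 <= (3%:R * L - 2%:R * (L * a) - (L * b) - (lbp * a) - lbq + xp + 2%:R * xq - 2%:R * yp) by clear -r3 r5 r6 r8; lra.
have B94 : 0 <= (4%:R * L - 2%:R * (L * a) - (L * b) - (L * t) - (lbp * a) - (lbp * b) - 2%:R * lbq + (lbq * t) + xp + xq - 2%:R * yp) by clear -r5 r6 r8 pf13 pf28; lra.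
have B95 : 0 <= (L + 2%:R * (L * t) - (lbp * b) - (lbp * t) - (lbq * t) - yq) by clear -r4 pf3 pf27; lra.
have B96 : 0 <= (3%:R * (L * t) - (lbp * t) - 2%:R * (lbq * t)) by clear -pf3 pf11 pf27; lra.
have B97 : 0 <= (L + 2%:R * (L * t) - (lbp * b) - (lbp * t) - lbq - (lbq * t) - xq) by clear -r4 r8 pf3 pf27; lra.
have B98 : 0 <= (L + (L * t) - lbp - (lbq * a) - (lbq * t) - xp) by clear -r2 r7 pf11 pf27; lra.
have B99 : 0 <= (L - (L * a) + (L * t) - lbp - (lbq * t) - xp + xq) by clear -r5 r7 pf11 pf27; lra.
have B100 : 0 <= (2%:R * L - (L * a) - lbp - (lbp * b) - lbq - xp) by clear -r4 r5 r7 r8; lra.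
have B101 : 0 <= (L + 3%:R * (L * t) - (lbp * t) - (lbq * a) - 2%:R * (lbq * t) - yp) by clear -r2 pf3 pf11 pf27; lra.
have B102 : 0 <= (L - (L * a) + 3%:R * (L * t) - (lbp * t) - 2%:R * (lbq * t) + xq - yp) by clear -r5 pf3 pf11 pf27; lra.
have B103 : 0 <= (2%:R * L - (L * a) + 2%:R * (L * t) - (lbp * b) - (lbp * t) - lbq - (lbq * t) - yp) by clear -r4 r5 r8 pf3 pf27; lra.
have B104 : 0 <= (3%:R * L - (L * a) - (L * b) - (L * t) - lbp + (lbp * t) - lbq - (lbq * a) - yp) by clear -r2 hL pf5 pf11; lra.
have B105 : 0 <= (3%:R * L - 2%:R * (L * a) - (L * b) - (L * t) - lbp + (lbp * t) - lbq + xq - yp) by clear -r5 hL pf5 pf11; lra.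
have B106 : 0 <= (4%:R * L - 2%:R * (L * a) - (L * b) - 2%:R * (L * t) - lbp - (lbp * b) + (lbp * t) - 2%:R * lbq + (lbq * t) - yp) by clear -r4 r5 r8 pf5 pf28; lra.
have B107 : 0 <= (3%:R * L - (L * a) - (L * b) + (L * t) - lbq - (lbq * a) - (lbq * t) + xp - 2%:R * yp) by clear -r2 r5 r6 r8 pf11 pf27; lra.
have B108 : 0 <= (3%:R * L - 2%:R * (L * a) - (L * b) + (L * t) - lbq - (lbq * t) + xp + xq - 2%:R * yp) by clear -r5 r6 r8 pf11 pf27; lra.
have B109 : 0 <= (4%:R * L - 2%:R * (L * a) - (L * b) - (lbp * b) - 2%:R * lbq + xp - 2%:R * yp) by clear -r4 r5 r6 r8; lra.
have SCXp : all (fun x => all (fun y => x <= y) [:: (0 + (- (lbq * b) + xp)); (0 + (L - (L * b) + xp - yq)); (0 + (L - (L * b) - (L * t) - (lbp * a) - lbq + (lbq * t) + xp)); (0 + (L - (L * b) - lbq + xp - xq)); (0 + ((L * t) - (lbp * t))); (0 + (2%:R * L - (L * a) - (L * b) - (L * t) - lbq + (lbq * t) + xp - yp)); (0 + ((L * t) - (lbp * a) - (lbp * t) + xq)); (0 + (2%:R * L - (L * a) - (L * b) - (L * t) - (lbp * a) - lbq + (lbq * t) + xp + xq - yp)); (0 + (2%:R * (L * t) - (lbp * t) - (lbq * t))); (0 + (2%:R * L - (L * a) - (L * b) - lbq + xp - yp))]) [:: (0 - 0); (0 - (L - (lbp * b) - yq)); (0 - ((L * t) - (lbq * t))); (0 -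 (L - (lbp * b) - lbq - xq)); (0 - (L - (L * t) - lbp + (lbp * t) - (lbq * a) - xp)); (0 - (L - (L * a) - (L * t) - lbp + (lbp * t) - xp + xq)); (0 - (2%:R * L - (L * a) - 2%:R * (L * t) - lbp - (lbp * b) + (lbp * t) - lbq + (lbq * t) - xp)); (0 - (L + (L * t) - (lbq * a) - (lbq * t) - yp)); (0 - (L - (L * a) + (L * t) - (lbq * t) + xq - yp)); (0 - (2%:R * L - (L * a) - (lbp * b) - lbq - yp))].
{ rewrite /=. apply/andP; split; [apply/andP; split; [by clear -B22; lra | apply/andP; split; [by clear -B2; lra | apply/andP; split; [by clear -B41; lra | apply/andP; split; [by clear -B9; lra | apply/andP; split; [by clear -B59; lra | apply/andP; split; [by clear -B68; lra | apply/andP; split; [by clear -B77; lra | apply/andP; split; [by clear -B87; lra | apply/andP; split; [by clear -B20; lra | apply/andP; split; [by clear -B21; lra | done]]]]]]]]]] | apply/andP; split; [apply/andP; split; [by clear -B23; lra | apply/andP; split; [by clear -B32; lra | apply/andP; split; [by clear -B42; lra | apply/andP; split; [by clear -B34; lra | apply/andP; split; [by clear -B60; lra | apply/andP; split; [by clear -B69; lra | apply/andP; split; [by clear -B78; lra | apply/andP; split; [by clear -B88; lra | apply/andP; split; [by clear -B95; lra | apply/andP; split; [by clear -B40; lra | done]]]]]]]]]] | apply/andP; split; [apply/andP; split; [by clear -B24; lra | apply/andP; split; [by clear -B33; lra | apply/andP; split; [by clear -B43; lra | apply/andP; split; [by clear -B51; lra | apply/andP; split; [by clear -B20; lra | apply/andP;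 split; [by clear -B21; lra | apply/andP; split; [by clear -B79; lra | apply/andP; split; [by clear -B49; lra | apply/andP; split; [by clear -B96; lra | apply/andP; split; [by clear -B57; lra | done]]]]]]]]]] | apply/andP; split; [apply/andP; split; [by clear -B25; lra | apply/andP; split; [by clear -B34; lra | apply/andP; split; [by clear -B44; lra | apply/andP; split; [by clear -B52; lra | apply/andP; split; [by clear -B61; lra | apply/andP; split; [by clear -B70; lra | apply/andP; split; [by clear -B80; lra | apply/andP; split; [by clear -B50; lra | apply/andP; split; [by clear -B97; lra | apply/andP; split; [by clear -B58; lra | done]]]]]]]]]] | apply/andP; split; [apply/andP; split; [by clear -B26; lra | apply/andP; split; [by clear -B35; lra | apply/andP; split; [by clear -B45; lra | apply/andP; split; [by clear -B53; lra | apply/andP; split; [by clear -B62; lra | apply/andP; split; [by clear -B71; lra | apply/andP; split; [by clear -B81; lra | apply/andP; split; [by clear -B89; lra | apply/andP; split; [by clear -B98; lra | apply/andP; split; [by clear -B104; lra | done]]]]]]]]]] | apply/andP; split; [apply/andP; split; [by clear -B27; lra | apply/andP; split; [by clear -B36; lra | apply/andP; split; [by clear -B46; lra | apply/andP; split; [by clear -B54; lra | apply/andP; split; [by clear -B63; lra | apply/andP; split; [by clear -B72; lra | apply/andP; split; [by clear -B82; lra | apply/andP; split; [by clear -B90; lra | apply/andP; split; [by clear -B99; lra | apply/andP; split; [by clear -B105; lra | done]]]]]]]]]] | apply/andP; split; [apply/andP; split; [by clear -B28; lra | apply/andP; split; [by clear -B37; lra | apply/andP; split; [by clear -B47; lra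 | apply/andP; split; [by clear -B55; lra | apply/andP; split; [by clear -B64; lra | apply/andP; split; [by clear -B73; lra | apply/andP; split; [by clear -B83; lra | apply/andP; split; [by clear -B91; lra | apply/andP; split; [by clear -B100; lra | apply/andP; split; [by clear -B106; lra | done]]]]]]]]]] | apply/andP; split; [apply/andP; split; [by clear -B29; lra | apply/andP; split; [by clear -B38; lra | apply/andP; split; [by clear -B48; lra | apply/andP; split; [by clear -B56; lra | apply/andP; split; [by clear -B65; lra | apply/andP; split; [by clear -B74; lra | apply/andP; split; [by clear -B84; lra | apply/andP; split; [by clear -B92; lra | apply/andP; split; [by clear -B101; lra | apply/andP; split; [by clear -B107; lra | done]]]]]]]]]] | apply/andP; split; [apply/andP; split; [by clear -B30; lra | apply/andP; split; [by clear -B39; lra | apply/andP; split; [by clear -B49; lra | apply/andP; split; [by clear -B57; lra | apply/andP; split; [by clear -B66; lra | apply/andP; split; [by clear -B75; lra | apply/andP; split; [by clear -B85; lra | apply/andP; split; [by clear -B93; lra | apply/andP; split; [by clear -B102; lra | apply/andP; split; [by clear -B108; lra | done]]]]]]]]]] | apply/andP; split; [apply/andP; split; [by clear -B31; lra | apply/andP; split; [by clear -B40; lra | apply/andP; split; [by clear -B50; lra | apply/andP; split; [by clear -B58; lra | apply/andP; split; [by clear -B67; lra | apply/andP; split; [by clear -B76; lra | apply/andP; split; [by clear -B86; lra | apply/andP; split; [by clear -B94; lra | apply/andP; split; [by clear -B103; lra | apply/andP; split; [by clear -B109; lra | done]]]]]]]]]] | done]]]]]]]]]]. }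
have [Xp /andP[HlXp HhXp]] := pick SCXp; clear SCXp.
move: HlXp HhXp => /= /andP[E110 /andP[E111 /andP[E112 /andP[E113 /andP[E114 /andP[E115 /andP[E116 /andP[E117 /andP[E118 /andP[E119 _]]]]]]]]]] /andP[E120 /andP[E121 /andP[E122 /andP[E123 /andP[E124 /andP[E125 /andP[E126 /andP[E127 /andP[E128 /andP[E129 _]]]]]]]]]].
have SCYp : all (fun x => all (fun y => x <= y) [:: (0 + ((L * t))); (Xp + (- lbp + (lbp * t) - xp + yp)); (0 + ((L * t) - (lbp * a) + xq)); (0 + (2%:R * (L * t) - (lbq * t))); (Xp + (2%:R * (L * t) - (lbq * t)))]) [:: (Xp - (- (lbp * t))); (0 - (L - (L * t) - (lbq * a) - yp)); (0 - (L - (L * a) - (L * t) + xq - yp)); (0 - (2%:R * L - (L * a) - 2%:R * (L * t) - (lbp * b) - lbq + (lbq * t) - yp)); (Xp - (2%:R * L - (L * a) - (L * b) - 2%:R * (L * t) - lbq + (lbq * t) + xp - yp))].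
{ rewrite /=. apply/andP; split; [apply/andP; split; [by clear -E124; lra | apply/andP; split; [by clear -B12; lra | apply/andP; split; [by clear -E126; lra | apply/andP; split; [by clear -E128; lra | apply/andP; split; [by clear -B20; lra | done]]]]] | apply/andP; split; [apply/andP; split; [by clear -B10; lra | apply/andP; split; [by clear -E114; lra | apply/andP; split; [by clear -B14; lra | apply/andP; split; [by clear -B17; lra | apply/andP; split; [by clear -E117; lra | done]]]]] | apply/andP; split; [apply/andP; split; [by clear -B6; lra | apply/andP; split; [by clear -E115; lra | apply/andP; split; [by clear -B15; lra | apply/andP; split; [by clear -B18; lra | apply/andP; split; [by clear -E118; lra | done]]]]] | apply/andP; split; [apply/andP; split; [by clear -B11; lra | apply/andP; split; [by clear -E116; lra | apply/andP; split; [by clear -B16; lra | apply/andP; split; [by clear -B19; lra | apply/andP; split; [by clear -E119; lra | done]]]]] | apply/andP; split; [apply/andP; split; [by clear -E125; lra | apply/andP; split; [by clear -B13; lra | apply/andP; split; [by clear -E127; lra | apply/andP; split; [by clear -E129; lra | apply/andP; split; [by clear -B21; lra | done]]]]] | done]]]]]. }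
have [Yp /andP[HlYp HhYp]] := pick SCYp; clear SCYp.
move: HlYp HhYp => /= /andP[E130 /andP[E131 /andP[E132 /andP[E133 /andP[E134 _]]]]] /andP[E135 /andP[E136 /andP[E137 /andP[E138 /andP[E139 _]]]]].
have SCXq : all (fun x => all (fun y => x <= y) [:: (0 + (- (lbp * a) + xq)); (Yp + (L - (L * a) - (L * t) + xq - yp)); (0 + ((L * t) - (lbq * t))); (Xp + ((L * t) - (lbq * t)))]) [:: (0 - 0); (Yp - ((L * t))); (0 - (L - (L * t) - (lbp * b) - lbq + (lbq * t) - xq)); (Xp - (L - (L * b) - (L * t) - lbq + (lbq * t) + xp - xq))].
{ rewrite /=. apply/andP; split; [apply/andP; split; [by clear -B4; lra | apply/andP; split; [by clear -E132; lra | apply/andP; split; [by clear -B7; lra | apply/andP; split; [by clear -E112; lra | done]]]] | apply/andP; split; [apply/andP; split; [by clear -E137; lra | apply/andP; split; [by clear -B6; lra | apply/andP; split; [by clear -E138; lra | apply/andP; split; [by clear -E139; lra | done]]]] | apply/andP; split; [apply/andP; split; [by clear -B5; lra | apply/andP; split; [by clear -E133; lra | apply/andP; split; [by clear -B8; lra | apply/andP; split; [by clear -E113; lra | done]]]] | apply/andP; split; [apply/andP; split; [by clear -E122; lra | apply/andP; split; [by clear -E134; lra | apply/andP; split; [by clear -E123; lra | apply/andP; split; [by clear -B9; lra | done]]]] | done]]]]. }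
have [Xq /andP[HlXq HhXq]] := pick SCXq; clear SCXq.
move: HlXq HhXq => /= /andP[E140 /andP[E141 /andP[E142 /andP[E143 _]]]] /andP[E144 /andP[E145 /andP[E146 /andP[E147 _]]]].
have SCYq : all (fun x => all (fun y => x <= y) [:: (0 + ((L * t))); (Xp + ((L * t))); (Xq + (- lbq + (lbq * t) - xq + yq))]) [:: (Xq - (- (lbq * t))); (0 - (L - (L * t) - (lbp * b) - yq)); (Xp - (L - (L * b) - (L * t) + xp - yq))].
{ rewrite /=. apply/andP; split; [apply/andP; split; [by clear -E146; lra | apply/andP; split; [by clear -E147; lra | apply/andP; split; [by clear -B3; lra | done]]] | apply/andP; split; [apply/andP; split; [by clear -B1; lra | apply/andP; split; [by clear -E111; lra | apply/andP; split; [by clear -E142; lra | done]]] | apply/andP; split; [apply/andP; split; [by clear -E121; lra | apply/andP; split; [by clear -B2; lra | apply/andP; split; [by clear -E143; lra | done]]] | done]]]. }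
have [Yq /andP[HlYq HhYq]] := pick SCYq; clear SCYq.
move: HlYq HhYq => /= /andP[E148 /andP[E149 /andP[E150 _]]] /andP[E151 /andP[E152 /andP[E153 _]]].
exists Xp, Yp, Xq, Yq; rewrite /relh; do ! split; clear -E110 E120 E130 E131 E135 E136 E140 E141 E144 E145 E148 E149 E150 E151 E152 E153; lra.
Qed.

Lemma rel1_swap (L lbp lbq xp yp xq yq a b : R) :
  rel1 L lbp lbq xp yp xq yq a b -> rel1 L lbq lbp xq yq xp yp b a.
Proof. rewrite /rel1; lra. Qed.

End Dir1.

Definition odir (s : Dir) : Dir := match s with DX => DY | DY => DX end.
Definition deqb (d e : Dir) : bool :=
  match d, e with DX, DX => true | DY, DY => true | _, _ => false end.
Definition beqb (d e : Box) : bool :=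
  match d, e with BI, BI => true | BJ, BJ => true | _, _ => false end.

Lemma deqb_refl s : deqb s s = true. Proof. by case: s. Qed.
Lemma deqb_odir s : deqb (odir s) s = false. Proof. by case: s. Qed.
Lemma beqb_refl p : beqb p p = true. Proof. by case: p. Qed.
Lemma beqb_other p : beqb (other p) p = false. Proof. by case: p. Qed.
Lemma other_other p : other (other p) = p. Proof. by case: p. Qed.
Lemma dir_cases d s : d = s \/ d = odir s. Proof. by case: d; case: s; auto. Qed.
Lemma box_cases k p : k = p \/ k = other p. Proof. by case: k; case: p; auto. Qed.

Section Main.
Variable R : realFieldType.

Lemma sum_perm (f : Dir -> Box -> R) s p :
  f DX BI + f DX BJ + f DY BI + f DY BJ = f s p + f s (other p) + f (odir s) p + f (odir s) (other p).
Proof. case: s; case: p => /=; lra. Qed.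

Lemma relax_rel1 (L : Dir -> R) (lb : Dir -> Box -> R) c l u :
  inRelax L lb c l u -> forall d k,
  rel1 (L d) (lb d k) (lb d (other k)) (c d k - l d k / 2%:R) (c d k + l d k / 2%:R)
       (c d (other k) - l d (other k) / 2%:R) (c d (other k) + l d (other k) / 2%:R)
       (u d k) (u d (other k)).
Proof.
move=> [H1 [H2 [H3 _]]] d k.
have [a1 a2] := H1 d k. have [b1 b2] := H1 d (other k).
have c1 := H2 d k. have c2 := H2 d (other k).
have d1 := H3 d k. have d2 := H3 d (other k).
rewrite other_other in b1 b2 c2.
rewrite /rel1; lra.
Qed.

Lemma rel1_relax (L : Dir -> R) (lb : Dir -> Box -> R) (X Y U : Dir -> Box -> R) :
  (forall d k, rel1 (L d) (lb d k) (lb d (other k)) (X d k) (Y d k)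
       (X d (other k)) (Y d (other k)) (U d k) (U d (other k))) ->
  U DX BI + U DX BJ + U DY BI + U DY BJ = 1 ->
  (forall d k, 0 <= U d k /\ U d k <= 1) ->
  inRelax L lb (fun d k => (X d k + Y d k) / 2%:R) (fun d k => Y d k - X d k) U.
Proof.
move=> H hs hb; split; [|split; [|split]] => //.
- move=> d k; have := H d k; rewrite /rel1; lra.
- move=> d k; have := H d k; rewrite /rel1; lra.
- move=> d k; have := H d k; rewrite /rel1; lra.
Qed.

Lemma div01 (x k : R) : 0 < k -> 0 <= x -> x <= k -> 0 <= x / k /\ x / k <= 1.
Proof.
move=> hk h0 h1; split; first by apply: divr_ge0 => //; apply: ltW.
by rewrite ler_pdivrMr // mul1r.
Qed.

Lemma not_ext (L : Dir -> R) (lb : Dir -> Box -> R)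
  (hlb : forall s k, 0 < lb s k) (hL : forall s, lb s BI + lb s BJ < L s)
  c l u s p : inRelax L lb c l u -> 0 < u s p -> u s p < 1 ->
  exists c1 l1 u1 c2 l2 u2,
    inRelax L lb c1 l1 u1 /\ inRelax L lb c2 l2 u2 /\
    (forall d k, c d k = u s p * c1 d k + (1 - u s p) * c2 d k) /\
    (forall d k, l d k = u s p * l1 d k + (1 - u s p) * l2 d k) /\
    (forall d k, u d k = u s p * u1 d k + (1 - u s p) * u2 d k) /\
    u1 s p = 1.
Proof.
move=> hR ht0 ht1.
have R1 := relax_rel1 hR.
have hsum : u s p + u s (other p) + u (odir s) p + u (odir s) (other p) = 1.
  by rewrite -sum_perm; case: hR => _ [_ [_ [h _]]].
have hb : forall d k, 0 <= u d k /\ u d k <= 1 by case: hR => _ [_ [_ [_ h]]].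
have hL' : forall d k, lb d k + lb d (other k) < L d by move=> d; case=> /=; rewrite ?(addrC (lb d BJ)).
set t := u s p in ht0 ht1 hsum *.
have [b0 b1] := hb s (other p). have [e0 e1] := hb (odir s) p. have [f0 f1] := hb (odir s) (other p).
have [Xp [Yp [Xq [Yq [HS1 HS2]]]]] :=
  splitS (hlb s p) (hlb s (other p)) (hL' s p) ht0 ht1 b0 (ltac:(lra) : t + u s (other p) <= 1) (R1 s p).
have [Xp' [Yp' [Xq' [Yq' [HT1 HT2]]]]] :=
  splitT (hlb (odir s) p) (hlb (odir s) (other p)) (hL' (odir s) p) e0 f0 ht0 ht1
     (ltac:(lra) : u (odir s) p + u (odir s) (other p) + t <= 1) (R1 (odir s) p).
have t0 : t != 0 by rewrite gt_eqF.
have t1 : 0 < 1 - t by lra.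
have t1' : 1 - t != 0 by rewrite gt_eqF.
pose W d k := if deqb d s then (if beqb k p then Xp else Xq) else (if beqb k p then Xp' else Xq').
pose V d k := if deqb d s then (if beqb k p then Yp else Yq) else (if beqb k p then Yp' else Yq').
pose X1 d k := W d k / t. pose Y1 d k := V d k / t.
pose X2 d k := (c d k - l d k / 2%:R - W d k) / (1 - t).
pose Y2 d k := (c d k + l d k / 2%:R - V d k) / (1 - t).
pose U1 d k := if deqb d s && beqb k p then 1 else 0 : R.
pose U2 d k := if deqb d s && beqb k p then 0 else u d k / (1 - t).
exists (fun d k => (X1 d k + Y1 d k) / 2%:R), (fun d k => Y1 d k - X1 d k), U1,
       (fun d k => (X2 d k + Y2 d k) / 2%:R), (fun d k => Y2 d k - X2 d k), U2.
have HS1' := relh_rel1 ht0 HS1. have HS2' := relh_rel1 t1 HS2.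
have HT1' := relh_rel1 ht0 HT1. have HT2' := relh_rel1 t1 HT2.
rewrite divff // mul0r in HS1'. rewrite mul0r in HS2'. rewrite !mul0r in HT1'.
split; [|split; [|split; [|split; [|split]]]].
- apply: rel1_relax.
  + move=> d k; case: (dir_cases d s) => ->; case: (box_cases k p) => ->;
    rewrite /X1 /Y1 /U1 /W /V ?other_other ?deqb_refl ?deqb_odir ?beqb_refl ?beqb_other /=.
    * exact: HS1'.
    * exact: rel1_swap.
    * exact: HT1'.
    * exact: rel1_swap.
  + rewrite (sum_perm U1 s p) /U1 deqb_refl deqb_odir beqb_refl beqb_other /=; lra.
  + move=> d k; rewrite /U1; case: (_ && _); lra.
- apply: rel1_relax.
  + move=> d k; case: (dir_cases d s) => ->; case: (box_cases k p) => ->;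
    rewrite /X2 /Y2 /U2 /W /V ?other_other ?deqb_refl ?deqb_odir ?beqb_refl ?beqb_other /=.
    * exact: HS2'.
    * exact: rel1_swap.
    * exact: HT2'.
    * exact: rel1_swap.
  + rewrite (sum_perm U2 s p) /U2 deqb_refl deqb_odir beqb_refl beqb_other /=.
    transitivity ((u s (other p) + u (odir s) p + u (odir s) (other p)) / (1 - t)); first by field; rewrite ?t0 ?t1'.
    rewrite (_ : u s (other p) + u (odir s) p + u (odir s) (other p) = 1 - t) ?divff //; lra.
  + move=> d k; rewrite /U2; case E: (_ && _); first lra.
    apply: div01 => //; first by case: (hb d k).
    move: E; case: (dir_cases d s) => ->; case: (box_cases k p) => ->;
      rewrite ?other_other ?deqb_refl ?deqb_odir ?beqb_refl ?beqb_other //= => _; lra.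
- move=> d k; rewrite /X1 /Y1 /X2 /Y2; field; by rewrite ?t0 ?t1'.
- move=> d k; rewrite /X1 /Y1 /X2 /Y2; field; by rewrite ?t0 ?t1'.
- move=> d k; rewrite /U1 /U2; case E: (deqb d s && beqb k p).
    move: E; case: (dir_cases d s) => ->; case: (box_cases k p) => ->;
      rewrite ?deqb_refl ?deqb_odir ?beqb_refl ?beqb_other //= => _.
    rewrite /t; lra.
  field; by rewrite ?t0 ?t1'.
- by rewrite /U1 deqb_refl beqb_refl.
Qed.

End Main.

Lemma emb_to_F (R : realFieldType) (L : Dir -> R) (lb : Dir -> Box -> R)
  (hlb : forall s k, 0 < lb s k) c l u :
  inEmb L lb c l u -> inF L lb c l u.
Proof.
move=> [hQ [hbin [[s0 [p0 [h1 h0]]] hpre]]].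
have hsum : u DX BI + u DX BJ + u DY BI + u DY BJ = 1.
  case: s0 h1 h0; case: p0 => h1 h0;
  rewrite ?h1 ?(h0 DX BI) ?(h0 DX BJ) ?(h0 DY BI) ?(h0 DY BJ) //; lra.
split => //; split; [|split; [|split; [|split]]].
- move=> s p.
  have [q1 [q2 q3]] := hQ s p. have [r1 [r2 r3]] := hQ s (other p).
  split.
  + case: (hbin s (other p)) => e; rewrite e; first lra.
    have := hpre s (other p) e; rewrite other_other /precedes; lra.
  + case: (hbin s p) => e; rewrite e; first lra.
    have := hpre s p e; rewrite /precedes; lra.
- move=> s p.
  have [q1 [q2 q3]] := hQ s p. have [r1 [r2 r3]] := hQ s (other p).
  case: (hbin s p) => e; rewrite e; first lra.
  have := hpre s p e; rewrite /precedes; lra.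
- by move=> s p; case: (hQ s p) => _ [].
- exact: hsum.
- by move=> s p; case: (hbin s p) => ->; lra.
Qed.

Lemma F_to_emb (R : realFieldType) (L : Dir -> R) (lb : Dir -> Box -> R)
  (hlb : forall s k, 0 < lb s k) c l u :
  inF L lb c l u -> inEmb L lb c l u.
Proof.
move=> [[H1 [H2 [H3 [H4 H5]]]] hbin].
have pos : forall s p, 0 <= lb s (other p) * u s (other p) /\ 0 <= lb s (other p) * u s p.
  move=> s p; have := hlb s (other p).
  by case: (hbin s p) => ->; case: (hbin s (other p)) => ->; lra.
split; [|split; [|split]] => //.
- move=> s p; have [a1 a2] := H1 s p; have [p1 p2] := pos s p; have := H3 s p; lra.
- case: (hbin DX BI) => e1; case: (hbin DX BJ) => e2; case: (hbin DY BI) => e3;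
  case: (hbin DY BJ) => e4; rewrite e1 e2 e3 e4 in H4; try lra.
  + exists DY, BJ; split => //; case; case => H //;
      first [exact e1 | exact e2 | exact e3 | exact e4 | by exfalso; apply: H].
  + exists DY, BI; split => //; case; case => H //;
      first [exact e1 | exact e2 | exact e3 | exact e4 | by exfalso; apply: H].
  + exists DX, BJ; split => //; case; case => H //;
      first [exact e1 | exact e2 | exact e3 | exact e4 | by exfalso; apply: H].
  + exists DX, BI; split => //; case; case => H //;
      first [exact e1 | exact e2 | exact e3 | exact e4 | by exfalso; apply: H].
- move=> s p e; have := H2 s p; rewrite e /precedes; lra.
Qed.

Unset Implicit Arguments.

Theorem theorem5p1 (R : realFieldType) (L : Dir -> R) (lb : Dir -> Box -> R)
  (hL : forall s, 0 < L s) (hlb : forall s k, 0 < lb s k) :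
  (forall c l u : Dir -> Box -> R, inEmb L lb c l u <-> inF L lb c l u) /\
  ((forall s, lb s BI + lb s BJ < L s) ->
   forall c l u : Dir -> Box -> R, extreme_relax L lb c l u ->
   forall s p, u s p = 0 \/ u s p = 1).
Proof.
split.
  by move=> c l u; split; [apply: emb_to_F | apply: F_to_emb].
move=> hsL c l u [hR hext] s p.
case: (eqVneq (u s p) 0) => [->|h0]; first by left.
case: (eqVneq (u s p) 1) => [->|h1]; first by right.
exfalso.
have [b0 b1] : 0 <= u s p /\ u s p <= 1 by case: hR => _ [_ [_ [_ h]]].
have ht0 : 0 < u s p by rewrite lt_neqAle eq_sym h0 b0.
have ht1 : u s p < 1 by rewrite lt_neqAle h1 b1.
have [c1 [l1 [u1 [c2 [l2 [u2 [Hr1 [Hr2 [Ec [El [Eu Hu1]]]]]]]]]]] :=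
  not_ext hlb hsL hR ht0 ht1.
have [_ [_ e]] := hext c1 l1 u1 c2 l2 u2 (u s p) Hr1 Hr2 ht0 ht1 Ec El Eu s p.
move: h1; rewrite -e Hu1; by rewrite eqxx.
Qed.
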